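(* Let $(\Omega,+)$ be a group and let $a,b$ be central subgroups of $\Omega$ (i.e. contained in the center). Then: (1) the ternary laws $(xyz)\mapsto\Gamma(x,a,y,b,z)$, $\check\Gamma(x,a,y,b,z)$ and $\Gamma(z,b,y,a,x)$ on $\mathcal{P}$ all coincide, and the ternary laws $\Sigma(b,x,y,z)$, $\check\Sigma(b,x,y,z)$, $\check\Sigma(b,z,y,x)$ and $\Sigma(b,z,y,x)$ on $\mathcal{P}$ all coincide; that is, $\mathcal{P}_{ab}=\check{\mathcal{P}}_{ab}=\mathcal{P}_{ba}^{opp}$ and $\mathcal{P}_b=\check{\mathcal{P}}_b=\check{\mathcal{P}}_b^{opp}=\mathcal{P}_b^{opp}$; (2) the set $\mathit{Gras}(\Omega)$ of all subgroups of $\Omega$ is stable under each of the four ternary laws $(x,y,z)\mapsto \Gamma(x,a,y,b,z)$, $\check\Gamma(x,a,y,b,z)$, $\Sigma(b,x,y,z)$, $\check\Sigma(b,x,y,z)$.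
   Context: $(\Omega,+)$ is a group written additively but not necessarily abelian; $\mathcal{P}$ is its power set. For $x,a,y,b,z\in\mathcal{P}$: $\Gamma(x,a,y,b,z)=\{\omega:\exists\alpha\in a,\beta\in b:\ \alpha+\omega+\beta\in y,\ \alpha+\omega\in z,\ \omega+\beta\in x\}$; $\check\Gamma(x,a,y,b,z)=\{\omega:\exists\alpha\in a,\beta\in b:\ \beta+\omega+\alpha\in y,\ \omega+\alpha\in z,\ \beta+\omega\in x\}$; $\Sigma(b,x,y,z)=\{\omega:\exists\beta,\beta'\in b:\ \omega+\beta\in x,\ \omega+\beta'+\beta\in y,\ \omega+\beta'\in z\}$; $\check\Sigma(b,x,y,z)=\{\omega:\exists\beta,\beta'\in b:\ \beta+\omega\in x,\ \beta+\beta'+\omega\in y,\ \beta'+\omega\in z\}$. $\mathcal{P}_{ab},\check{\mathcal P}_{ab},\mathcal P_b,\check{\mathcal P}_b$ denote $\mathcal P$ with the laws $\Gamma(x,a,y,b,z)$, $\check\Gamma(x,a,y,b,z)$, $\Sigma(b,x,y,z)$, $\check\Sigma(b,x,y,z)$ respectively; for a ternary law $(xyz)$, the opposite law is $(x,y,z)\mapsto(zyx)$, denoted by the superscript $opp$. *)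

(* Defs.v *)
(* Subsets of Omega (elements of the power set P) are predicates G -> Prop;
   equality of sets is Leibniz equality of predicates. *)
Set Implicit Arguments.

Section Defs.
Variables (G : Type) (add : G -> G -> G) (zero : G) (opp : G -> G).

Record is_group : Prop := {
  addA : forall u v w, add u (add v w) = add (add u v) w;
  add0l : forall u, add zero u = u;
  add0r : forall u, add u zero = u;
  addNl : forall u, add (opp u) u = zero;
  addNr : forall u, add u (opp u) = zero }.

Definition pset := G -> Prop.

Definition is_subgroup (s : pset) : Prop :=
  s zero /\ (forall u v, s u -> s v -> s (add u v)) /\ (forall u, s u -> s (opp u)).

Definition central (s : pset) : Prop :=
  forall u, s u -> forall w, add u w = add w u.

Definition Gamma (x a y b z : pset) : pset := fun w =>
  exists al be, a al /\ b be /\ y (add (add al w) be) /\ z (add al w) /\ x (add w be).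

Definition GammaC (x a y b z : pset) : pset := fun w =>
  exists al be, a al /\ b be /\ y (add (add be w) al) /\ z (add w al) /\ x (add be w).

Definition Sigma (b x y z : pset) : pset := fun w =>
  exists be be', b be /\ b be' /\ x (add w be) /\ y (add (add w be') be) /\ z (add w be').

Definition SigmaC (b x y z : pset) : pset := fun w =>
  exists be be', b be /\ b be' /\ x (add be w) /\ y (add (add be be') w) /\ z (add be' w).

End Defs.

(* Main.v *)
Require Import Defs.
From Stdlib Require Import FunctionalExtensionality PropExtensionality.
Set Implicit Arguments.

Section Aux.
Variables (G : Type) (add : G -> G -> G) (zero : G) (opp : G -> G).
Hypothesis HG : is_group add zero opp.

Lemma swapr c u v : (forall w, add c w = add w c) ->
  add (add u c) v = add (add u v) c.
Proof.
  intro Hc. rewrite <- (addA HG), Hc, (addA HG). reflexivity.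
Qed.

Lemma oppD u v : opp (add u v) = add (opp v) (opp u).
Proof.
  transitivity (add (opp (add u v)) (add (add u v) (add (opp v) (opp u)))).
  - rewrite <- (addA HG u v), (addA HG v), (addNr HG), (add0l HG), (addNr HG), (add0r HG).
    reflexivity.
  - rewrite (addA HG), (addNl HG), (add0l HG). reflexivity.
Qed.

Lemma oppC c : (forall w, add c w = add w c) -> forall w, add (opp c) w = add w (opp c).
Proof.
  intros Hc w.
  transitivity (add (opp c) (add (add w c) (opp c))).
  - rewrite <- (addA HG w), (addNr HG), (add0r HG). reflexivity.
  - rewrite <- Hc, !(addA HG), (addNl HG), (add0l HG). reflexivity.
Qed.

Lemma mix c u v d : (forall w, add c w = add w c) ->
  add (add u c) (add v d) = add (add u v) (add c d).
Proof.
  intro Hc. rewrite <- (addA HG u c), (addA HG c v), Hc, <- (addA HG v c), (addA HG u v).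
  reflexivity.
Qed.

End Aux.

Ltac pe := apply functional_extensionality; intro w; apply propositional_extensionality.

Theorem theorem3p3 (G : Type) (add : G -> G -> G) (zero : G) (opp : G -> G)
  (HG : is_group add zero opp) (a b : pset G)
  (Ha : is_subgroup add zero opp a) (Hac : central add a)
  (Hb : is_subgroup add zero opp b) (Hbc : central add b) :
  (* (1) P_ab = Pcheck_ab = P_ba^opp *)
  (forall x y z : pset G,
     Gamma add x a y b z = GammaC add x a y b z /\
     GammaC add x a y b z = Gamma add z b y a x) /\
  (* (1) P_b = Pcheck_b = Pcheck_b^opp = P_b^opp *)
  (forall x y z : pset G,
     Sigma add b x y z = SigmaC add b x y z /\
     SigmaC add b x y z = SigmaC add b z y x /\
     SigmaC add b z y x = Sigma add b z y x) /\
  (* (2) Gras(Omega) is stable under the four ternary laws *)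
  (forall x y z : pset G,
     is_subgroup add zero opp x -> is_subgroup add zero opp y ->
     is_subgroup add zero opp z ->
     is_subgroup add zero opp (Gamma add x a y b z) /\
     is_subgroup add zero opp (GammaC add x a y b z) /\
     is_subgroup add zero opp (Sigma add b x y z) /\
     is_subgroup add zero opp (SigmaC add b x y z)).
Proof.
  assert (E1 : forall al be w, a al -> b be ->
     add (add al w) be = add (add be w) al).
  { intros al be w Hal Hbe. rewrite (Hac al Hal w), (Hbc be Hbe w).
    apply (swapr HG). apply Hac; auto. }
  assert (E2 : forall be be' w, b be -> b be' ->
     add (add w be') be = add (add be be') w).
  { intros be be' w H1 H2. destruct Hb as [_ [Hb2 _]].
    rewrite <- (addA HG), <- (Hbc _ (Hb2 _ _ H2 H1)), (Hbc be' H2 be). reflexivity. }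
  assert (GG : forall x y z, Gamma add x a y b z = GammaC add x a y b z).
  { intros x y z. pe. split; intros [al [be [H1 [H2 [H3 [H4 H5]]]]]];
    exists al, be; repeat split; auto.
    - rewrite <- E1; auto.
    - first [rewrite (Hac al H1); now auto | rewrite <- (Hac al H1); now auto].
    - first [rewrite (Hbc be H2); now auto | rewrite <- (Hbc be H2); now auto].
    - rewrite E1; auto.
    - first [rewrite (Hac al H1); now auto | rewrite <- (Hac al H1); now auto].
    - first [rewrite (Hbc be H2); now auto | rewrite <- (Hbc be H2); now auto]. }
  assert (SS : forall x y z, Sigma add b x y z = SigmaC add b x y z).
  { intros x y z. pe. split; intros [be [be' [H1 [H2 [H3 [H4 H5]]]]]];
    exists be, be'; repeat split; auto.
    - first [rewrite (Hbc be H1); now auto | rewrite <- (Hbc be H1); now auto].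
    - rewrite <- E2; auto.
    - first [rewrite (Hbc be' H2); now auto | rewrite <- (Hbc be' H2); now auto].
    - first [rewrite (Hbc be H1); now auto | rewrite <- (Hbc be H1); now auto].
    - rewrite E2; auto.
    - first [rewrite (Hbc be' H2); now auto | rewrite <- (Hbc be' H2); now auto]. }
  assert (SC : forall x y z, SigmaC add b x y z = SigmaC add b z y x).
  { intros x y z. pe. split; intros [be [be' [H1 [H2 [H3 [H4 H5]]]]]];
    exists be', be; repeat split; auto;
    rewrite (Hbc be' H2 be); auto. }
  split; [|split].
  - intros x y z. split; [apply GG|].
    pe. split; intros [al [be [H1 [H2 [H3 [H4 H5]]]]]];
    exists be, al; repeat split; auto.
  - intros x y z. split; [apply SS|split; [apply SC|]].
    rewrite <- SS. reflexivity.
  - destruct Ha as [Ha0 [HaD HaN]]. destruct Hb as [Hb0 [HbD HbN]].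
    intros x y z [Hx0 [HxD HxN]] [Hy0 [HyD HyN]] [Hz0 [HzD HzN]].
    assert (HGam : is_subgroup add zero opp (Gamma add x a y b z)).
    { split; [|split].
      - exists zero, zero. rewrite !(add0l HG). auto.
      - intros w1 w2 [al1 [be1 [A1 [B1 [Y1 [Z1 X1]]]]]] [al2 [be2 [A2 [B2 [Y2 [Z2 X2]]]]]].
        assert (EZ : add (add al1 al2) (add w1 w2) = add (add al1 w1) (add al2 w2)).
        { rewrite (Hac al1 A1 w1), (Hac al2 A2 w2), (@mix G add zero opp HG _ _ _ _ (Hac al1 A1)).
          symmetry. symmetry. apply (Hac _ (HaD _ _ A1 A2)). }
        exists (add al1 al2), (add be1 be2). repeat split; auto.
        + rewrite EZ, <- (@mix G add zero opp HG _ _ _ _ (Hbc be1 B1)). auto.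
        + rewrite EZ. auto.
        + rewrite <- (@mix G add zero opp HG _ _ _ _ (Hbc be1 B1)). auto.
      - intros w [al [be [A1 [B1 [Y1 [Z1 X1]]]]]].
        exists (opp al), (opp be). repeat split; auto.
        + rewrite <- (oppD HG), <- (oppD HG). apply HyN.
          rewrite <- (Hac al A1 w), (Hbc be B1). auto.
        + rewrite <- (oppD HG). apply HzN. rewrite <- (Hac al A1 w). auto.
        + rewrite <- (oppD HG). apply HxN. rewrite (Hbc be B1). auto. }
    assert (HSig : is_subgroup add zero opp (Sigma add b x y z)).
    { split; [|split].
      - exists zero, zero. rewrite !(add0r HG). auto.
      - intros w1 w2 [be1 [ce1 [B1 [C1 [X1 [Y1 Z1]]]]]] [be2 [ce2 [B2 [C2 [X2 [Y2 Z2]]]]]].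
        exists (add be1 be2), (add ce1 ce2). repeat split; auto.
        + rewrite <- (@mix G add zero opp HG _ _ _ _ (Hbc be1 B1)). auto.
        + rewrite <- (@mix G add zero opp HG _ _ _ _ (Hbc ce1 C1)), <- (@mix G add zero opp HG _ _ _ _ (Hbc be1 B1)). auto.
        + rewrite <- (@mix G add zero opp HG _ _ _ _ (Hbc ce1 C1)). auto.
      - intros w [be [ce [B1 [C1 [X1 [Y1 Z1]]]]]].
        exists (opp be), (opp ce). repeat split; auto.
        + rewrite <- (oppD HG). apply HxN. rewrite (Hbc be B1). auto.
        + rewrite <- (oppD HG), <- (oppD HG). apply HyN.
          rewrite (Hbc be B1), (Hbc ce C1). auto.
        + rewrite <- (oppD HG). apply HzN. rewrite (Hbc ce C1). auto. }
    rewrite <- GG, <- SS. auto.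
Qed.
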